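(* For $n\ge1$, the sum of the semi-perimeters of all members of $I_n$ is $\frac{1}{12}(n^2+15n+8)\,n!$.
   Context: An inversion sequence of length $n$ is a sequence $\rho=\rho_1\cdots\rho_n$ of integers with $1\le \rho_i\le i$ for all $i$; $I_n$ is the set of these. Represent $\rho$ as a bargraph whose $i$-th column has $\rho_i$ unit cells standing on the $x$-axis. The semi-perimeter of $\rho$ is half the perimeter of this bargraph (bottom boundary included), i.e. $n+\rho_1+\sum_{i=1}^{n-1}\max(\rho_{i+1}-\rho_i,0)$. *)

(* Defs.v *)
From mathcomp Require Import all_boot.
Set Implicit Arguments. Unset Strict Implicit. Unset Printing Implicit Defensive.

(* An inversion sequence rho_1 ... rho_n is encoded as a finite function
   rho : 'I_n -> 'I_n.+1 where position i : 'I_n corresponds to index i+1,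
   with values constrained by 1 <= rho_{i+1} <= i+1. *)
Definition is_invseq (n : nat) (rho : {ffun 'I_n -> 'I_n.+1}) : bool :=
  [forall i : 'I_n, (0 < rho i) && (rho i <= i.+1)].

(* value rho_{k+1} as a nat (0 outside the range, unused) *)
Definition rv (n : nat) (rho : {ffun 'I_n -> 'I_n.+1}) (k : nat) : nat :=
  match insub k with Some i => nat_of_ord (rho i) | None => 0 end.

(* semi-perimeter: n + rho_1 + sum_{i=1}^{n-1} max(rho_{i+1} - rho_i, 0);
   with 0-based k, rho_{k+1} = rv rho k. Truncated nat subtraction = max(.,0). *)
Definition semiperimeter (n : nat) (rho : {ffun 'I_n -> 'I_n.+1}) : nat :=
  n + rv rho 0 + \sum_(0 <= k < n.-1) (rv rho k.+1 - rv rho k).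

(* Main.v *)
Require Import Defs.
From mathcomp Require Import all_boot zify.
Set Implicit Arguments. Unset Strict Implicit. Unset Printing Implicit Defensive.

Section Gen.
Variables (aT rT : finType).

Lemma card_familyP (F : aT -> pred rT) :
  #|(family F : simpl_pred {ffun aT -> rT})| = \prod_(x : aT) #|F x|.
Proof.
rewrite (card_family F) foldrE big_map /= big_enum; apply: eq_bigl => x //.
Qed.

Definition upd (F : aT -> pred rT) (i : aT) (a : rT) : aT -> pred rT :=
  fun l => if l == i then (fun x => x == a) else F l.

Lemma card_upd F i a : a \in F i ->
  #|(family (upd F i a) : simpl_pred {ffun aT -> rT})| * #|F i|
  = #|(family F : simpl_pred {ffun aT -> rT})|.
Proof.
move=> Fa; rewrite !card_familyP (bigD1 i) // [in RHS](bigD1 i) //=.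
rewrite /upd eqxx card1 mul1n mulnC; congr (_ * _).
by apply: eq_bigr => l /negbTE ->.
Qed.

Lemma family_upd F i a (f : {ffun aT -> rT}) : a \in F i ->
  (f \in family F) && (f i == a) = (f \in family (upd F i a)).
Proof.
move=> Fa; apply/andP/familyP => [[/familyP Ff /eqP fi] l | H].
  rewrite /upd; case: eqP => [->|_]; [by rewrite unfold_in /= fi | exact: Ff].
have := H i; rewrite /upd eqxx unfold_in /= => fi; split => //.
apply/familyP => l; case: (eqVneq l i) => [->|ne]; first by rewrite (eqP fi).
by have := H l; rewrite /upd (negbTE ne).
Qed.

Lemma sum_fam1 (F : aT -> pred rT) (G : {ffun aT -> rT} -> nat) i :
  \sum_(f in family F) G f =
  \sum_(a in F i) \sum_(f in family (upd F i a)) G f.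
Proof.
rewrite (partition_big (fun f : {ffun aT -> rT} => f i) (F i)); last first.
  by move=> f H; move/familyP: H => /(_ i).
apply: eq_bigr => a Fa; apply: eq_bigl => f; exact: family_upd.
Qed.

Lemma sum_single (F : aT -> pred rT) (g : rT -> nat) i :
  (\sum_(f in family F) g (f i)) * #|F i| =
  #|(family F : simpl_pred {ffun aT -> rT})| * \sum_(a in F i) g a.
Proof.
rewrite (sum_fam1 _ _ i) big_distrl big_distrr /=; apply: eq_bigr => a Fa.
rewrite (eq_bigr (fun _ => g a)); last first.
  by move=> f /familyP /(_ i); rewrite /upd eqxx unfold_in /= => /eqP ->.
by rewrite sum_nat_const -mulnA (mulnC (g a)) mulnA card_upd // mulnC.
Qed.

Lemma sum_pair (F : aT -> pred rT) (g : rT -> rT -> nat) i j : i != j ->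
  (\sum_(f in family F) g (f i) (f j)) * (#|F i| * #|F j|) =
  #|(family F : simpl_pred {ffun aT -> rT})| * \sum_(a in F i) \sum_(b in F j) g a b.
Proof.
move=> ij; rewrite (sum_fam1 _ _ i) big_distrl big_distrr /=; apply: eq_bigr => a Fa.
rewrite (eq_bigr (fun f : {ffun aT -> rT} => g a (f j))); last first.
  by move=> f /familyP /(_ i); rewrite /upd eqxx unfold_in /= => /eqP ->.
have Uj : upd F i a j = F j by rewrite /upd eq_sym (negbTE ij).
rewrite mulnCA; have := sum_single (upd F i a) (g a) j; rewrite Uj => ->.
by rewrite mulnA (mulnC #|F i|) card_upd.
Qed.
End Gen.
Lemma ordsum N m (h : nat -> nat) : m <= N ->
  \sum_(x : 'I_N.+1 | (0 < x) && (x <= m)) h x = \sum_(1 <= a < m.+1) h a.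
Proof.
move=> mN.
rewrite -(big_mkord (fun x => (0 < x) && (x <= m)) h).
rewrite (big_cat_nat _ (n:=m.+1)) //=.

rewrite [X in _ + X = _]big_nat_cond [X in _ + X = _]big1 ?addn0; last first.
  by move=> i /andP[/andP[h1 _] /andP[_ h2]]; exfalso; lia.
rewrite big_ltn_cond //= big_nat_cond [in RHS]big_nat_cond; apply: eq_bigl => i.
lia.
Qed.

Lemma inner a m : 2 * \sum_(1 <= b < m.+1) (b - a) = (m - a) * (m - a).+1.
Proof.
elim: m => [|m IH]; first by rewrite big_geq.
rewrite big_nat_recr //= mulnDr IH.
case: (leqP a m) => h.
  rewrite subSn //; nia.
by rewrite !(eqP (ltnW h)) (_ : m.+1 - a = 0) //; apply/eqP; rewrite subn_eq0.
Qed.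

Lemma aa1 k : 3 * \sum_(1 <= a < k.+2) a * a.+1 = k.+1 * k.+2 * k.+3.
Proof.
elim: k => [|k IH]; first by rewrite big_nat1.
rewrite big_nat_recr //= mulnDr IH; nia.
Qed.

Lemma outer k : 6 * \sum_(1 <= a < k.+2) \sum_(1 <= b < k.+3) (b - a)
  = k.+1 * k.+2 * k.+3.
Proof.
rewrite -aa1 (_ : 6 = 3 * 2) // -mulnA big_distrr /=; congr (_ * _).
rewrite (eq_bigr (fun a => (k.+2 - a) * (k.+2 - a).+1)); last by move=> a _; rewrite inner.
rewrite big_nat_rev /=; apply: eq_big_nat => a /andP[h1 h2].
have -> : 1 + k.+2 - a.+1 = k.+2 - a by lia.
have -> : k.+2 - (k.+2 - a) = a by lia.
done.
Qed.

Lemma lin m : 2 * \sum_(0 <= k < m) (k + 3) = m * (m + 5).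
Proof.
elim: m => [|m IH]; first by rewrite big_geq.
rewrite big_nat_recr //= mulnDr IH; nia.
Qed.

Definition Fn n : 'I_n -> pred 'I_n.+1 := fun i x => (0 < x) && (x <= i.+1).

Lemma card_Fn n (i : 'I_n) : #|Fn i| = i.+1.
Proof.
rewrite -sum1_card.
transitivity (\sum_(1 <= a < i.+2) 1); first exact: (@ordsum n i.+1 (fun _ => 1) (ltn_ord i)).
by rewrite sum_nat_const_nat muln1 subn1.
Qed.

Lemma invseq_family n (rho : {ffun 'I_n -> 'I_n.+1}) :
  is_invseq rho = (rho \in family (@Fn n)).
Proof. by []. Qed.

Lemma card_fam n : #|(family (@Fn n) : simpl_pred {ffun 'I_n -> 'I_n.+1})| = n`!.
Proof.
rewrite card_familyP (eq_bigr (fun i : 'I_n => i.+1)); last by move=> i _; rewrite card_Fn.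
by rewrite fact_prod big_add1 /= big_mkord.
Qed.

Lemma rv_ord n (rho : {ffun 'I_n -> 'I_n.+1}) k (hk : k < n) :
  rv rho k = rho (Ordinal hk).
Proof. by rewrite /rv insubT. Qed.

Theorem corollary2p4 (n : nat) : 0 < n ->
  12 * (\sum_(rho : {ffun 'I_n -> 'I_n.+1} | is_invseq rho) semiperimeter rho)
  = (n ^ 2 + 15 * n + 8) * n`!.
Proof.
move=> n0.
set N := n`!.
rewrite (eq_bigl (fun rho => rho \in family (@Fn n))) //.
rewrite /semiperimeter big_split /= big_split /= sum_nat_const card_fam -/N.
have h0 : \sum_(f in family (@Fn n)) rv f 0 = N.
  rewrite (eq_bigr (fun f : {ffun 'I_n -> 'I_n.+1} => val (f (Ordinal n0)))); last first.
    by move=> f _; rewrite rv_ord.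
  have := sum_single (@Fn n) (fun a => val a) (Ordinal n0).
  rewrite card_Fn muln1 => ->.
  rewrite -/N; transitivity (N * \sum_(1 <= a < 2) a); last by rewrite big_nat1 muln1.
  congr (_ * _); first exact: card_fam. exact: (@ordsum n 1 (fun x => x) n0).
have hk : forall k, k < n.-1 ->
    6 * \sum_(f in family (@Fn n)) (rv f k.+1 - rv f k) = N * (k + 3).
  move=> k kn; have hk0 : k < n by lia.
  have hk1 : k.+1 < n by lia.
  rewrite (eq_bigr (fun f : {ffun 'I_n -> 'I_n.+1} =>
      val (f (Ordinal hk1)) - val (f (Ordinal hk0)))); last first.
    by move=> f _; rewrite !rv_ord.
  have neq : Ordinal hk0 != Ordinal hk1 by rewrite -val_eqE /= neq_ltn ltnSn.
  have := sum_pair (@Fn n) (fun a b => val b - val a) neq.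
  rewrite !card_Fn card_fam /= -/N.
  have -> : \sum_(a in Fn (Ordinal hk0)) \sum_(b in Fn (Ordinal hk1)) (val b - val a)
      = \sum_(1 <= a < k.+2) \sum_(1 <= b < k.+3) (b - a).
    transitivity (\sum_(a in Fn (Ordinal hk0)) \sum_(1 <= b < k.+3) (b - val a)).
      by apply: eq_bigr => a _; exact: (@ordsum n k.+2 (fun b => b - val a) hk1).
    exact: (@ordsum n k.+1 (fun a => \sum_(1 <= b < k.+3) (b - a)) hk0).
  move=> H; apply/eqP; rewrite -(eqn_pmul2r (_ : 0 < k.+1 * k.+2)) //.
  rewrite -mulnA H mulnCA outer; apply/eqP; nia.
rewrite h0 exchange_big /=.
rewrite !mulnDr big_distrr /=.
rewrite (eq_big_nat _ _ (F2 := fun k => N * (2 * (k + 3)))); last first.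
  by move=> k /andP[_ kn]; rewrite (_ : 12 = 2 * 6) // -mulnA hk //; lia.
rewrite -big_distrr /= -big_distrr /= lin.
clear h0 hk; clearbody N; case: n n0 => [//|m] _ /=; nia.
Qed.
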